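(* For any $(\Sigma_{\rho_0},\dots,\Sigma_{\rho_{T-1}})\in\mathcal M_T$, the matrices $\Pi_k$ satisfy $\hat\Pi_k\succeq\Pi_k\succeq\check\Pi_k\succeq0$ for all $k\in\{0,\dots,T\}$, and $\Sigma_{Q_k}$ satisfies $\hat\Sigma_{Q_k}\succeq\Sigma_{Q_k}\succeq\check\Sigma_{Q_k}\succ0$ for all $k\in\{0,\dots,T-1\}$, where $\hat\Sigma_{Q_k}=\varepsilon(R_k+B_k^\top\check\Pi_{k+1}B_k)^{-1}$ and $\check\Sigma_{Q_k}=\varepsilon(R_k+B_k^\top\hat\Pi_{k+1}B_k)^{-1}$.
   Context: Fix integers $n,m,T\ge1$, $\varepsilon>0$, $A_k\in\mathbb R^{n\times n}$, $B_k\in\mathbb R^{n\times m}$, symmetric positive definite $R_k\in\mathbb R^{m\times m}$ ($k=0,\dots,T-1$) and $F\in\mathbb R^{n\times n}$. $\mathcal M_T=(\mathbb S^m_{\succeq0})^T$, $\mathbb S^m_{\succeq0}$ the symmetric PSD $m\times m$ matrices; $\Sigma^{1/2}$ the PSD square root. For $(\Sigma_{\rho_0},\dots,\Sigma_{\rho_{T-1}})\in\mathcal M_T$: $\Pi_T=F$, $C_k=(R_k+B_k^\top\Pi_{k+1}B_k)/\varepsilon$, $\Pi_k=A_k^\top\Pi_{k+1}A_k-\frac1\varepsilon A_k^\top\Pi_{k+1}B_k\Sigma_{\rho_k}^{1/2}(I+\Sigma_{\rho_k}^{1/2}C_k\Sigma_{\rho_k}^{1/2})^{-1}\Sigma_{\rho_k}^{1/2}B_k^\top\Pi_{k+1}A_k$,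 $\Sigma_{Q_k}=\varepsilon(R_k+B_k^\top\Pi_{k+1}B_k)^{-1}$. Also $\check\Pi_T=F$, $\check\Pi_k=A_k^\top\check\Pi_{k+1}A_k-A_k^\top\check\Pi_{k+1}B_k(R_k+B_k^\top\check\Pi_{k+1}B_k)^{-1}B_k^\top\check\Pi_{k+1}A_k$ ($k=T-1,\dots,0$), and $\hat\Pi_T=F$, $\hat\Pi_k=A_k^\top\cdots A_{T-1}^\top FA_{T-1}\cdots A_k$ for $k\le T-1$. *)

(* Defs.v *)
From HB Require Import structures.
From mathcomp Require Import all_boot all_order all_algebra.
From mathcomp Require Import boolp reals.
Set Implicit Arguments. Unset Strict Implicit. Unset Printing Implicit Defensive.
Import Order.TTheory GRing.Theory Num.Theory.
Local Open Scope ring_scope.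

Section Defs.
Variable R : realType.

Definition qform (p : nat) (A : 'M[R]_p) (x : 'cV[R]_p) : R := (x^T *m A *m x) 0 0.

Definition psd (p : nat) (A : 'M[R]_p) : Prop :=
  A^T = A /\ forall x : 'cV[R]_p, 0 <= qform A x.

Definition pd (p : nat) (A : 'M[R]_p) : Prop :=
  A^T = A /\ forall x : 'cV[R]_p, x != 0 -> 0 < qform A x.

Definition loewner_ge (p : nat) (A B : 'M[R]_p) : Prop := psd (A - B).

(* the PSD square root (unique when it exists, i.e. when A is PSD) *)
Definition psd_sqrt (p : nat) (A : 'M[R]_p) : 'M[R]_p :=
  match pselect (exists S : 'M[R]_p, psd S /\ S *m S = A) with
  | left h => proj1_sig (cid h)
  | right _ => 0
  end.

(* backward recursion: back step T F j = value at time T - j,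
   with value F at time T and value_k = step k value_{k+1}. *)
Fixpoint back (p : nat) (step : nat -> 'M[R]_p -> 'M[R]_p) (T : nat)
  (F : 'M[R]_p) (j : nat) : 'M[R]_p :=
  match j with
  | 0 => F
  | j'.+1 => step (T - j)%N (back step T F j')
  end.

Definition at_time (p : nat) (step : nat -> 'M[R]_p -> 'M[R]_p) (T : nat)
  (F : 'M[R]_p) (k : nat) : 'M[R]_p := back step T F (T - k)%N.

Variables (n m : nat) (eps : R) (A : nat -> 'M[R]_n) (B : nat -> 'M[R]_(n, m))
  (Rk : nat -> 'M[R]_m) (F : 'M[R]_n) (Sig : nat -> 'M[R]_m) (T : nat).

Definition Pi_step (k : nat) (P : 'M[R]_n) : 'M[R]_n :=
  let C := eps^-1 *: (Rk k + (B k)^T *m P *m B k) in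
  let S := psd_sqrt (Sig k) in
  (A k)^T *m P *m A k
  - eps^-1 *: ((A k)^T *m P *m B k *m S *m invmx (1%:M + S *m C *m S)
               *m S *m (B k)^T *m P *m A k).
Definition Pi (k : nat) : 'M[R]_n := at_time Pi_step T F k.

Definition Pic_step (k : nat) (P : 'M[R]_n) : 'M[R]_n :=
  (A k)^T *m P *m A k
  - (A k)^T *m P *m B k *m invmx (Rk k + (B k)^T *m P *m B k)
      *m (B k)^T *m P *m A k.
Definition Pic (k : nat) : 'M[R]_n := at_time Pic_step T F k.

(* hat-Pi_k = A_k^T ... A_{T-1}^T F A_{T-1} ... A_k, by backward recursion *)
Definition Pih_step (k : nat) (P : 'M[R]_n) : 'M[R]_n := (A k)^T *m P *m A k.
Definition Pih (k : nat) : 'M[R]_n := at_time Pih_step T F k.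

Definition SigQ_of (P : 'M[R]_n) (k : nat) : 'M[R]_m :=
  eps *: invmx (Rk k + (B k)^T *m P *m B k).

Definition SigQ (k : nat) := SigQ_of (Pi k.+1) k.
Definition SigQh (k : nat) := SigQ_of (Pic k.+1) k.
Definition SigQc (k : nat) := SigQ_of (Pih k.+1) k.

End Defs.

(* Main.v *)
Require Import Defs.
From HB Require Import structures.
From mathcomp Require Import all_boot all_order all_algebra.
From mathcomp Require Import boolp reals.
From mathcomp Require Import ring lra zify.
Import Order.TTheory GRing.Theory Num.Theory.
Local Open Scope ring_scope.

Module Helpers.
Set Implicit Arguments. Unset Strict Implicit. Unset Printing Implicit Defensive.

Section Aux.
Variable R : realType.

Lemma eD p q (X Y : 'M[R]_(p,q)) i j : (X + Y) i j = X i j + Y i j.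
Proof. by rewrite mxE. Qed.
Lemma eN p q (X : 'M[R]_(p,q)) i j : (- X) i j = - X i j.
Proof. by rewrite mxE. Qed.
Lemma eZ p q (a : R) (X : 'M[R]_(p,q)) i j : (a *: X) i j = a * X i j.
Proof. by rewrite mxE. Qed.

Lemma trB p q (X Y : 'M[R]_(p,q)) : (X - Y)^T = X^T - Y^T.
Proof. exact: linearB. Qed.
Lemma trD p q (X Y : 'M[R]_(p,q)) : (X + Y)^T = X^T + Y^T.
Proof. exact: linearD. Qed.
Lemma trZ p q a (X : 'M[R]_(p,q)) : (a *: X)^T = a *: X^T.
Proof. exact: linearZ. Qed.
Lemma trN p q (X : 'M[R]_(p,q)) : (- X)^T = - X^T.
Proof. exact: linearN. Qed.

Lemma sAl p q r a (X : 'M[R]_(p,q)) (Y : 'M[R]_(q,r)) : a *: X *m Y = a *: (X *m Y).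
Proof. by rewrite scalemxAl. Qed.
Lemma sAr p q r a (X : 'M[R]_(p,q)) (Y : 'M[R]_(q,r)) : X *m (a *: Y) = a *: (X *m Y).
Proof. by rewrite scalemxAr. Qed.

Lemma qformE p (A : 'M[R]_p) x : qform A x = (x^T *m A *m x) 0 0.
Proof. by []. Qed.

Lemma qformD p (A B : 'M[R]_p) x : qform (A + B) x = qform A x + qform B x.
Proof. by rewrite /qform mulmxDr mulmxDl eD. Qed.

Lemma psdD p (A B : 'M[R]_p) : psd A -> psd B -> psd (A + B).
Proof.
move=> [sA pA] [sB pB]; split; first by rewrite linearD /= sA sB.
by move=> x; rewrite qformD addr_ge0.
Qed.

Lemma qform_congr p q (P : 'M[R]_p) (X : 'M[R]_(p,q)) x :
  qform (X^T *m P *m X) x = qform P (X *m x).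
Proof. by rewrite /qform trmx_mul !mulmxA. Qed.

Lemma psd_congr p q (P : 'M[R]_p) (X : 'M[R]_(p,q)) : psd P -> psd (X^T *m P *m X).
Proof.
move=> [sP pP]; split; first by rewrite !trmx_mul trmxK sP mulmxA.
by move=> x; move: (pP (X *m x)); rewrite /qform trmx_mul !mulmxA.
Qed.

Lemma psdZ p (a : R) (A : 'M[R]_p) : 0 <= a -> psd A -> psd (a *: A).
Proof.
move=> a0 [sA pA]; split; first by rewrite linearZ /= sA.
by move=> x; rewrite /qform -scalemxAr -scalemxAl eZ; apply: mulr_ge0 => //; exact: pA.
Qed.

Lemma psd1 p : psd (1%:M : 'M[R]_p).
Proof.
split; first by rewrite trmx1.
move=> x; rewrite /qform mulmx1 mxE; apply: sumr_ge0 => i _.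
by rewrite mxE -expr2 sqr_ge0.
Qed.

Lemma loewner_trans p (A B C : 'M[R]_p) : loewner_ge A B -> loewner_ge B C -> loewner_ge A C.
Proof.
rewrite /loewner_ge => h1 h2; have := psdD h1 h2.
by rewrite addrA subrK.
Qed.

Lemma psd_of_ge p (A B : 'M[R]_p) : loewner_ge A B -> psd B -> psd A.
Proof. by rewrite /loewner_ge => h1 h2; have := psdD h1 h2; rewrite subrK. Qed.

Lemma qform_pos p (x : 'cV[R]_p) : x != 0 -> 0 < qform 1%:M x.
Proof.
move=> nz; rewrite lt_def; rewrite (proj2 (psd1 p)) andbT.
apply: contra nz; rewrite /qform mulmx1 mxE psumr_eq0; last first.
  by move=> i _; rewrite mxE -expr2 sqr_ge0.
move/allP=> h; apply/eqP/matrixP => i j; rewrite ord1 mxE.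
by have := h i (mem_index_enum _); rewrite mxE -expr2 sqrf_eq0 => /eqP.
Qed.

Lemma pd_psd p (A : 'M[R]_p) : pd A -> psd A.
Proof.
move=> [sA pA]; split=> // x; have [->|nz] := eqVneq x 0.
  by rewrite /qform mulmx0 mxE.
exact: ltW (pA x nz).
Qed.

Lemma pdD p (A B : 'M[R]_p) : pd A -> psd B -> pd (A + B).
Proof.
move=> [sA pA] [sB pB]; split; first by rewrite linearD /= sA sB.
move=> x nz; rewrite qformD; have h1 := pA x nz; have h2 := pB x; lra.
Qed.

Lemma pdZ p (a : R) (A : 'M[R]_p) : 0 < a -> pd A -> pd (a *: A).
Proof.
move=> a0 [sA pA]; split; first by rewrite linearZ /= sA.
by move=> x nz; rewrite /qform -scalemxAr -scalemxAl eZ; apply: mulr_gt0 => //; exact: pA.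
Qed.

Lemma pd_unit p (A : 'M[R]_p) : pd A -> A \in unitmx.
Proof.
move=> [sA pA]; rewrite unitmxE unitfE; apply/negP => /det0P [v nz hv].
have : v^T != 0 by apply: contra nz => /eqP h; rewrite -[v]trmxK h trmx0.
move=> /pA; rewrite /qform -mulmxA -{1}sA -trmx_mul hv trmx0 mulmx0 mxE.
by rewrite ltxx.
Qed.

Lemma sym_inv p (A : 'M[R]_p) : A^T = A -> (invmx A)^T = invmx A.
Proof. by move=> h; rewrite trmx_inv h. Qed.

Lemma pd_inv_psd p (A : 'M[R]_p) : pd A -> psd (invmx A).
Proof.
move=> hA; have uA := pd_unit hA; have sA := proj1 hA.
have -> : invmx A = (invmx A)^T *m A *m invmx A.
  by rewrite sym_inv // mulVmx // mul1mx.
exact: psd_congr (pd_psd hA).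
Qed.

Lemma pd_inv_pd p (A : 'M[R]_p) : pd A -> pd (invmx A).
Proof.
move=> hA; have uA := pd_unit hA; have sA := proj1 hA.
split; first exact: sym_inv.
move=> x nz; have -> : invmx A = (invmx A)^T *m A *m invmx A.
  by rewrite sym_inv // mulVmx // mul1mx.
rewrite qform_congr.
have nz' : invmx A *m x != 0.
  by apply: contra nz => /eqP h; rewrite -(mulKVmx uA x) h mulmx0.
exact: (proj2 hA) _ nz'.
Qed.
End Aux.

Ltac mnorm := rewrite ?(mulmxBl, mulmxBr, mulmxDl, mulmxDr, mulNmx, mulmxN, mulmxA, mul1mx, mulmx1, sAl, sAr, scalerA, scalerDr, scalerBr, scaleNr, scalerN).
Ltac mtr := rewrite ?(trB, trD, trZ, trN, trmx_mul, trmx1, trmxK, trmx_inv).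
Ltac mcan u := rewrite ?(mulmxK u, mulmxKV u, mulVmx u, mulmxV u); mnorm.
Ltac ment := apply/matrixP => i j; rewrite !(eD, eN, eZ).


Section Alg.
Variable R : realType.

Lemma complete p q (M : 'M[R]_p) (G K : 'M[R]_(p,q)) : M \in unitmx -> M^T = M ->
 K^T *m M *m K - K^T *m G - G^T *m K =
 (K - invmx M *m G)^T *m M *m (K - invmx M *m G) - G^T *m invmx M *m G.
Proof.
move=> uM sM; mtr; rewrite ?sM; mnorm.
rewrite (mulmxK uM) !(mulmxKV uM).
apply/matrixP => i j; rewrite !(eD, eN, eZ); ring.
Qed.

Lemma keyid p (S M N : 'M[R]_p) (e : R) : e != 0 ->
  M \in unitmx -> N \in unitmx -> S^T = S -> M^T = M -> N^T = N ->
  N = 1%:M + S *m (e^-1 *: M) *m S ->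
  let W := e^-1 *: (S *m invmx N *m S) in
  invmx M - W = (1%:M - M *m W)^T *m invmx M *m (1%:M - M *m W)
     + e^-1 *: ((invmx N *m S)^T *m 1%:M *m (invmx N *m S)).
Proof.
move=> e0 uM uN sS sM sN hN W.
have hSMS : forall q (X : 'M[R]_(q,p)), X *m S *m M *m S = e *: (X *m N) - e *: X.
  move=> q X; rewrite hN; mnorm; rewrite mulrV ?scale1r; last by rewrite unitfE.
  by rewrite addrAC subrr add0r.
rewrite /W; mtr; rewrite sS sM sN; mnorm.
rewrite ?(mulmxK uM) ?(mulmxKV uM) ?(mulVmx uM) ?(mulmxV uM).
rewrite !hSMS; mnorm.
rewrite ?(mulmxK uN) ?(mulmxKV uN).
apply/matrixP => i j; rewrite !(eD, eN, eZ). field. done.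
Qed.
End Alg.



Section Gen.
Variable R : realType.

Lemma psd0 p : psd (0 : 'M[R]_p).
Proof. by split; [rewrite trmx0 | move=> x; rewrite /qform mulmx0 mul0mx mxE]. Qed.

Lemma pd1 p : pd (1%:M : 'M[R]_p).
Proof. split; [exact: trmx1 | exact: qform_pos]. Qed.

Lemma inv_anti p (M1 M2 : 'M[R]_p) : pd M1 -> pd M2 -> psd (M2 - M1) ->
  psd (invmx M1 - invmx M2).
Proof.
move=> h1 h2 hD; have u1 := pd_unit h1; have u2 := pd_unit h2.
have s1 := proj1 h1; have s2 := proj1 h2.
have -> : invmx M1 - invmx M2 = (invmx M2)^T *m (M2 - M1) *m invmx M2
   + (invmx M2 - invmx M1)^T *m M1 *m (invmx M2 - invmx M1).
  mtr; rewrite s1 s2; mnorm; mcan u1; mcan u2; ment; ring.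
apply: psdD; apply: psd_congr => //; exact: pd_psd.
Qed.

Definition ric n m (A : 'M[R]_n) (B : 'M[R]_(n,m)) (Rr : 'M[R]_m) (P : 'M[R]_n) :=
  A^T *m P *m A - A^T *m P *m B *m invmx (Rr + B^T *m P *m B) *m B^T *m P *m A.

Lemma ric_compl p q (A : 'M[R]_p) (B : 'M[R]_(p,q)) (P : 'M[R]_p) (M : 'M[R]_q) K :
 P^T = P -> M \in unitmx -> M^T = M ->
 (A - B *m K)^T *m P *m (A - B *m K) + K^T *m (M - B^T *m P *m B) *m K =
 (A^T *m P *m A - A^T *m P *m B *m invmx M *m B^T *m P *m A) +
   (K - invmx M *m (B^T *m P *m A))^T *m M *m (K - invmx M *m (B^T *m P *m A)).
Proof.
move=> sP uM sM; mtr; rewrite sP sM; mnorm; mcan uM; ment; ring.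
Qed.

Lemma ric_psd p q (A : 'M[R]_p) (B : 'M[R]_(p,q)) Rr P :
  psd P -> pd Rr -> psd (ric A B Rr P).
Proof.
move=> hP hR; set M := Rr + B^T *m P *m B.
have hM : pd M by apply: pdD => //; exact: psd_congr.
have uM := pd_unit hM; have sM := proj1 hM.
set L := invmx M *m (B^T *m P *m A).
have := ric_compl A B L (proj1 hP) uM sM.
rewrite /L subrr trmx0 mul0mx mulmx0 addr0 /M addrK => e; rewrite /ric -e.
apply: psdD; apply: psd_congr => //; exact: pd_psd.
Qed.

Lemma ric_mono p q (A : 'M[R]_p) (B : 'M[R]_(p,q)) Rr P1 P2 :
  psd P1 -> psd (P2 - P1) -> pd Rr -> psd (ric A B Rr P2 - ric A B Rr P1).
Proof.
move=> h1 hD hR; have h2 : psd P2 by have := psdD hD h1; rewrite subrK.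
set M1 := Rr + B^T *m P1 *m B; set M2 := Rr + B^T *m P2 *m B.
have hM1 : pd M1 by apply: pdD => //; exact: psd_congr.
have hM2 : pd M2 by apply: pdD => //; exact: psd_congr.
set L2 := invmx M2 *m (B^T *m P2 *m A).
set L1 := invmx M1 *m (B^T *m P1 *m A).
have e2 := ric_compl A B L2 (proj1 h2) (pd_unit hM2) (proj1 hM2).
have e1 := ric_compl A B L2 (proj1 h1) (pd_unit hM1) (proj1 hM1).
rewrite -/L2 subrr trmx0 mul0mx mulmx0 addr0 /M2 addrK in e2.
rewrite -/L1 /M1 addrK in e1.
have -> : ric A B Rr P2 - ric A B Rr P1 =
  (A - B *m L2)^T *m (P2 - P1) *m (A - B *m L2) + (L2 - L1)^T *m M1 *m (L2 - L1).
  have e1' := e1; move: e1'; move/(congr1 (fun Z => Z - (L2 - L1)^T *m M1 *m (L2 - L1))).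
  rewrite addrK => e1'.
  rewrite /ric -e2 -e1' /M1.
  set X := A - B *m L2; set Q := (L2 - L1)^T *m _ *m (L2 - L1).
  rewrite [X^T *m (P2 - P1)]mulmxBr mulmxBl; ment; ring.
apply: psdD; apply: psd_congr => //; exact: pd_psd.
Qed.
End Gen.



Section Gen2.
Variable R : realType.

Definition pis n m (e : R) (A : 'M[R]_n) (B : 'M[R]_(n,m)) (Rr S : 'M[R]_m) (P : 'M[R]_n) :=
  A^T *m P *m A - e^-1 *: (A^T *m P *m B *m S *m
     invmx (1%:M + S *m (e^-1 *: (Rr + B^T *m P *m B)) *m S) *m S *m B^T *m P *m A).

Lemma pis_facts p q e (A : 'M[R]_p) (B : 'M[R]_(p,q)) Rr S P :
  0 < e -> psd S -> psd P -> pd Rr ->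
  psd (pis e A B Rr S P - ric A B Rr P) /\ psd (A^T *m P *m A - pis e A B Rr S P).
Proof.
move=> e0 hS hP hR; have sS := proj1 hS; have sP := proj1 hP.
set M := Rr + B^T *m P *m B.
have hM : pd M by apply: pdD => //; exact: psd_congr.
have uM := pd_unit hM; have sM := proj1 hM.
set N := 1%:M + S *m (e^-1 *: M) *m S.
have hN : pd N.
  apply: pdD; first exact: pd1.
  rewrite -{1}sS; apply: psd_congr; apply: psdZ; first by rewrite invr_ge0 ltW.
  exact: pd_psd.
have uN := pd_unit hN; have sN := proj1 hN.
set W := e^-1 *: (S *m invmx N *m S).
set X := B^T *m P *m A.
have hW : psd W.
  apply: psdZ; first by rewrite invr_ge0 ltW.
  rewrite -{1}sS; apply: psd_congr; exact: pd_inv_psd.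
have eX : X^T = A^T *m P *m B by rewrite /X !trmx_mul trmxK sP mulmxA.
split.
  have -> : pis e A B Rr S P - ric A B Rr P = X^T *m (invmx M - W) *m X.
    rewrite eX /pis /ric -/M -/N /W /X; mnorm; ment; ring.
  apply: psd_congr; rewrite keyid //; last by rewrite gt_eqF.
  apply: psdD; first by apply: psd_congr; exact: pd_inv_psd.
  apply: psdZ; first by rewrite invr_ge0 ltW.
  apply: psd_congr; exact: psd1.
have -> : A^T *m P *m A - pis e A B Rr S P = X^T *m W *m X.
  rewrite eX /pis -/M -/N /W /X; mnorm; ment; ring.
exact: psd_congr.
Qed.
End Gen2.


Lemma psd_sqrt_psd (R : realType) p (S : 'M[R]_p) : psd (psd_sqrt S).
Proof.
rewrite /psd_sqrt; case: pselect => [h|_]; last exact: psd0.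
exact: (proj1 (proj2_sig (cid h))).
Qed.

Lemma at_timeS (R : realType) p (step : nat -> 'M[R]_p -> 'M[R]_p) T F k :
  (k < T)%N -> at_time step T F k = step k (at_time step T F k.+1).
Proof.
move=> kT; rewrite /at_time.
have -> : (T - k = (T - k.+1).+1)%N by rewrite subnSK.
by rewrite /= subnSK // subKn // ltnW.
Qed.

Lemma at_timeT (R : realType) p (step : nat -> 'M[R]_p -> 'M[R]_p) T F :
  at_time step T F T = F.
Proof. by rewrite /at_time subnn. Qed.


End Helpers.
Import Helpers.

Theorem lemma2 (R : realType) (n m T : nat) (eps : R)
  (A : nat -> 'M[R]_n) (B : nat -> 'M[R]_(n, m)) (Rk : nat -> 'M[R]_m)
  (F : 'M[R]_n) (Sig : nat -> 'M[R]_m) :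
  (0 < n)%N -> (0 < m)%N -> (0 < T)%N -> 0 < eps ->
  (forall k, (k < T)%N -> pd (Rk k)) ->
  psd F ->
  (forall k, (k < T)%N -> psd (Sig k)) ->
  (forall k, (k <= T)%N ->
     loewner_ge (Pih A F T k) (Pi eps A B Rk F Sig T k) /\
     loewner_ge (Pi eps A B Rk F Sig T k) (Pic A B Rk F T k) /\
     psd (Pic A B Rk F T k)) /\
  (forall k, (k < T)%N ->
     loewner_ge (SigQh eps A B Rk F T k) (SigQ eps A B Rk F Sig T k) /\
     loewner_ge (SigQ eps A B Rk F Sig T k) (SigQc eps A B Rk F T k) /\
     pd (SigQc eps A B Rk F T k)).
Proof.
move=> _ _ _ e0 hR hF _.
have F0 : loewner_ge F F by rewrite /loewner_ge subrr; exact: psd0.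
have step : forall k, (k < T)%N ->
   [/\ loewner_ge (Pih A F T k.+1) (Pi eps A B Rk F Sig T k.+1),
       loewner_ge (Pi eps A B Rk F Sig T k.+1) (Pic A B Rk F T k.+1) &
       psd (Pic A B Rk F T k.+1)] ->
   [/\ loewner_ge (Pih A F T k) (Pi eps A B Rk F Sig T k),
       loewner_ge (Pi eps A B Rk F Sig T k) (Pic A B Rk F T k) &
       psd (Pic A B Rk F T k)].
  move=> k kT [h1 h2 h3].
  have -> : Pih A F T k = Pih_step A k (Pih A F T k.+1) by exact: at_timeS.
  have -> : Pi eps A B Rk F Sig T k = Pi_step eps A B Rk Sig k (Pi eps A B Rk F Sig T k.+1)
    by exact: at_timeS.
  have -> : Pic A B Rk F T k = Pic_step A B Rk k (Pic A B Rk F T k.+1) by exact: at_timeS.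
  set Ph := Pih A F T k.+1; set P := Pi eps A B Rk F Sig T k.+1; set Pc := Pic A B Rk F T k.+1.
  have hP : psd P := psd_of_ge h2 h3.
  have [f1 f2] := pis_facts (A k) (B k) e0 (psd_sqrt_psd (Sig k)) hP (hR k kT).
  have ePi : Pi_step eps A B Rk Sig k P = pis eps (A k) (B k) (Rk k) (psd_sqrt (Sig k)) P by [].
  have ePic : forall Q, Pic_step A B Rk k Q = ric (A k) (B k) (Rk k) Q by [].
  rewrite ePi !ePic /Pih_step; split.
  - apply: (loewner_trans _ f2).
    by rewrite /loewner_ge -mulmxBl -mulmxBr; exact: psd_congr.
  - apply: (loewner_trans f1); rewrite /loewner_ge.
    exact: (ric_mono (A k) (B k) h3 (h2 : psd (P - Pc)) (hR k kT)).
  - exact: (ric_psd (A k) (B k) h3 (hR k kT)).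
have main : forall j, (j <= T)%N ->
   [/\ loewner_ge (Pih A F T (T - j)) (Pi eps A B Rk F Sig T (T - j)),
       loewner_ge (Pi eps A B Rk F Sig T (T - j)) (Pic A B Rk F T (T - j)) &
       psd (Pic A B Rk F T (T - j))].
  elim=> [|j IH] jT.
    by rewrite subn0 /Pih /Pi /Pic !at_timeT; split.
  have kT : (T - j.+1 < T)%N by lia.
  apply: step => //; rewrite -subSn // subSS; exact: IH (ltnW jT).
have main' : forall k, (k <= T)%N ->
   [/\ loewner_ge (Pih A F T k) (Pi eps A B Rk F Sig T k),
       loewner_ge (Pi eps A B Rk F Sig T k) (Pic A B Rk F T k) &
       psd (Pic A B Rk F T k)].
  by move=> k kT; have := main (T - k)%N (leq_subr _ _); rewrite subKn.
split.
  by move=> k kT; have [a b c] := main' k kT.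
move=> k kT; have [a b c] := main' k.+1 kT.
have hP := psd_of_ge b c; have hPh := psd_of_ge a hP.
rewrite /SigQh /SigQ /SigQc /SigQ_of.
set Ph := Pih A F T k.+1; set P := Pi eps A B Rk F Sig T k.+1; set Pc := Pic A B Rk F T k.+1.
have pdM : forall Q, psd Q -> pd (Rk k + (B k)^T *m Q *m B k).
  by move=> Q hQ; apply: pdD; [exact: hR | exact: psd_congr].
have anti : forall Q1 Q2, psd Q1 -> loewner_ge Q2 Q1 ->
   loewner_ge (eps *: invmx (Rk k + (B k)^T *m Q1 *m B k))
              (eps *: invmx (Rk k + (B k)^T *m Q2 *m B k)).
  move=> Q1 Q2 h1 h21; have h2 := psd_of_ge h21 h1.
  rewrite /loewner_ge -scalerBr; apply: psdZ; first exact: ltW.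
  apply: inv_anti; [exact: pdM | exact: pdM | ].
  rewrite opprD addrACA subrr add0r -mulmxBl -mulmxBr; exact: psd_congr.
split; first exact: anti.
split; first exact: anti.
apply: pdZ => //; apply: pd_inv_pd; exact: pdM.
Qed.
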